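(* Fix a treatment group $d$, a post-treatment target age $a$, and a control group $d'$ with $d'>a\ge d$. Suppose the No Anticipation assumption holds for both genders $g\in\{f,m\}$ and both groups $d$ and $d'$, and suppose $$\frac{\gamma_{\mathrm{PT}}(f,d,d',a)}{APO(f,d,\infty,a)}=\frac{\gamma_{\mathrm{PT}}(m,d,d',a)}{APO(m,d,\infty,a)}.$$ Then $$\theta(f,d,a)-\theta(m,d,a)=\big[\delta_\theta(f,d,d',a)-\delta_\theta(m,d,d',a)\big]\,\frac{\delta_{\mathrm{APO}}(m,d,d',a)}{APO(m,d,\infty,a)},$$ so that the left-hand side is identified whenever $APO(m,d,\infty,a)$ is known.
   Context: Population of individuals with gender $G\in\{f,m\}$ and age at first childbirth $D$ (with $D=\infty$ meaning never). For each age $a$ and each (possibly counterfactual) first-birth age $d'\in\mathbb{N}\cup\{\infty\}$ there is a potential outcome (earnings) $Y_a(d')$; observed earnings satisfy consistency $Y_a=Y_a(D)$. Define $APO(g,d,d',a)=\mathbb{E}[Y_a(d')\mid G=g,D=d]$, $ATE(g,d,a)=APO(g,d,d,a)-APO(g,d,\infty,a)$, and $\theta(g,d,a)=ATE(g,d,a)/APO(g,d,\infty,a)$. Descriptive quantities: $\delta_{\mathrm{APO}}(g,d,d',a)=\mathbb{E}[Y_{d-1}\mid G=g,D=d]+\mathbb{E}[Y_a-Y_{d-1}\mid G=g,D=d']$, $\delta_{\mathrm{ATE}}(g,d,d',a)=\mathbb{E}[Y_a\mid G=g,D=d]-\delta_{\mathrm{APO}}(g,d,d',a)$, $\delta_\theta(g,d,d',a)=\delta_{\mathrm{ATE}}(g,d,d',a)/\delta_{\mathrm{APO}}(g,d,d',a)$.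 Parallel-trends violation: $\gamma_{\mathrm{PT}}(g,d,d',a)=APO(g,d,\infty,a)-APO(g,d,\infty,d-1)-[APO(g,d',\infty,a)-APO(g,d',\infty,d-1)]$. No Anticipation for gender $g$ and group $d$: $APO(g,d,d,b)=APO(g,d,\infty,b)$ for every age $b<d$. All denominators appearing are assumed nonzero. *)

(* Defs.v *)
From HB Require Import structures.
From mathcomp Require Import all_boot all_order all_algebra.
From mathcomp Require Import all_classical all_reals all_analysis.
Set Implicit Arguments. Unset Strict Implicit. Unset Printing Implicit Defensive.
Import Order.TTheory GRing.Theory Num.Theory.
Local Open Scope classical_set_scope.
Local Open Scope ring_scope.

Inductive gender := female | male.

Section Defs.
Context {R : realType} {dT : measure_display} {T : measurableType dT}.
Variable P : probability T R.
(* G : gender; D : age at first birth, None = never (infinity);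
   Y a d' : potential earnings at age a under first-birth age d'. *)
Variables (G : T -> gender) (D : T -> option nat) (Y : nat -> option nat -> T -> R).

Definition grp (g : gender) (k : option nat) : set T :=
  [set w | G w = g /\ D w = k].

Definition cexp (X : T -> R) (A : set T) : R :=
  fine (\int[P]_(w in A) (X w)%:E) / fine (P A).

(* observed earnings, consistency Y_a = Y_a(D) built in *)
Definition Yobs (a : nat) (w : T) : R := Y a (D w) w.

Definition APO (g : gender) (d : nat) (d' : option nat) (a : nat) : R :=
  cexp (Y a d') (grp g (Some d)).

Definition ATE g d a := APO g d (Some d) a - APO g d None a.
Definition theta g d a := ATE g d a / APO g d None a.

Definition delta_APO (g : gender) (d d' a : nat) : R :=
  cexp (Yobs d.-1) (grp g (Some d))
  + cexp (fun w => Yobs a w - Yobs d.-1 w) (grp g (Some d')).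
Definition delta_ATE g d d' a :=
  cexp (Yobs a) (grp g (Some d)) - delta_APO g d d' a.
Definition delta_theta g d d' a := delta_ATE g d d' a / delta_APO g d d' a.

Definition gamma_PT (g : gender) (d d' a : nat) : R :=
  APO g d None a - APO g d None d.-1 - (APO g d' None a - APO g d' None d.-1).

Definition NoAnticipation (g : gender) (d : nat) : Prop :=
  forall b : nat, (b < d)%N -> APO g d (Some d) b = APO g d None b.

End Defs.

(* Main.v *)
Require Import Defs.
From HB Require Import structures.
From mathcomp Require Import all_boot all_order all_algebra.
From mathcomp Require Import all_classical all_reals all_analysis.
From mathcomp Require Import ring.
Import Order.TTheory GRing.Theory Num.Theory.
Local Open Scope classical_set_scope.
Local Open Scope ring_scope.

Lemma cexp_congr (R : realType) (dT : measure_display) (T : measurableType dT)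
  (P : probability T R) (X Z : T -> R) (A : set T) :
  (forall w, A w -> X w = Z w) -> cexp P X A = cexp P Z A.
Proof.
move=> h; rewrite /cexp; congr (fine _ / _).
by apply: eq_integral => w; rewrite inE => /h ->.
Qed.

Lemma cexpB (R : realType) (dT : measure_display) (T : measurableType dT)
  (P : probability T R) (X Z : T -> R) (A : set T) :
  measurable A ->
  P.-integrable setT (fun w => (X w)%:E) ->
  P.-integrable setT (fun w => (Z w)%:E) ->
  cexp P (fun w => X w - Z w) A = cexp P X A - cexp P Z A.
Proof.
move=> mA iX iZ.
have iX' : P.-integrable A (EFin \o X) by exact: (integrableS measurableT mA _ iX).
have iZ' : P.-integrable A (EFin \o Z) by exact: (integrableS measurableT mA _ iZ).
rewrite /cexp -mulrBl; congr (_ / _).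
under eq_integral do rewrite EFinB.
rewrite integralB_EFin // fineB //; exact: integrable_fin_num.
Qed.

Theorem proposition2 (R : realType) (dT : measure_display) (T : measurableType dT)
  (P : probability T R) (G : T -> gender) (D : T -> option nat)
  (Y : nat -> option nat -> T -> R) (d d' a : nat)
  (hmeas : forall g k, measurable (grp G D g k))
  (hint : forall (b : nat) (k : option nat), P.-integrable setT (fun w => (Y b k w)%:E))
  (hd : (0 < d)%N) (hda : (d <= a)%N) (had' : (a < d')%N)
  (hNA : forall g, NoAnticipation P G D Y g d /\ NoAnticipation P G D Y g d')
  (hAPO : forall g, APO P G D Y g d None a != 0)
  (hdAPO : forall g, delta_APO P G D Y g d d' a != 0)
  (hPT : gamma_PT P G D Y female d d' a / APO P G D Y female d None a
       = gamma_PT P G D Y male d d' a / APO P G D Y male d None a) :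
  theta P G D Y female d a - theta P G D Y male d a
  = (delta_theta P G D Y female d d' a - delta_theta P G D Y male d d' a)
    * (delta_APO P G D Y male d d' a / APO P G D Y male d None a).
Proof.
have key : forall g, delta_APO P G D Y g d d' a
    = APO P G D Y g d None a - gamma_PT P G D Y g d d' a.
  move=> g; have [NAd NAd'] := hNA g.
  rewrite /delta_APO /gamma_PT.
  have -> : cexp P (Yobs D Y d.-1) (grp G D g (Some d)) = APO P G D Y g d None d.-1.
    rewrite -NAd; last by rewrite prednK // ltnS leqnn.
    by apply: cexp_congr => w [_ hw]; rewrite /Yobs hw.
  have -> : cexp P (fun w => Yobs D Y a w - Yobs D Y d.-1 w) (grp G D g (Some d'))
      = APO P G D Y g d' None a - APO P G D Y g d' None d.-1.
    rewrite -(NAd' a) // -(NAd' d.-1); last first.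
      by apply: leq_ltn_trans had'; apply: leq_trans hda; exact: leq_pred.
    rewrite /APO -cexpB //.
    by apply: cexp_congr => w [_ hw]; rewrite /Yobs hw.
  ring.
have hX : forall g, cexp P (Yobs D Y a) (grp G D g (Some d)) = APO P G D Y g d (Some d) a.
  by move=> g; apply: cexp_congr => w [_ hw]; rewrite /Yobs hw.
rewrite /theta /delta_theta /delta_ATE /ATE !hX.
move: (hdAPO female) (hdAPO male) (hAPO female) (hAPO male) hPT.
rewrite !key.
set Af := APO _ _ _ _ female d None a; set Am := APO _ _ _ _ male d None a.
set gf := gamma_PT _ _ _ _ female _ _ _; set gm := gamma_PT _ _ _ _ male _ _ _.
set Xf := APO _ _ _ _ female _ _ _; set Xm := APO _ _ _ _ male _ _ _.
move=> h1 h2 h3 h4 e.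
have egf : gf = gm / Am * Af by rewrite -e mulfVK.
rewrite egf in h1 *.
have h5 : 1 - gm / Am != 0.
  apply: contra h2 => /eqP h; apply/eqP.
  have : Am * (1 - gm / Am) = 0 by rewrite h mulr0.
  by rewrite mulrBr mulr1 mulrCA divff // mulr1.
have h6 : Af - gm / Am * Af = Af * (1 - gm / Am) by rewrite mulrBr mulr1 mulrC.
rewrite h6 in h1 *.
have h7 : Am - gm = Am * (1 - gm / Am) by rewrite mulrBr mulr1 mulrCA divff // mulr1.
rewrite h7.
field.
by rewrite h2 h3 h4.
Qed.
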